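(* Let $a,b,c\ge 0$ and let $q:\mathbb R^M\to\mathbb R_+$ be a positive semidefinite quadratic form. Then the function $x\mapsto (a+b\,q(x))e^{-c\,q(x)}$ is log-concave on $\mathbb R^M$ whenever $ca\ge b$.
   Context: A function $f:\mathbb R^M\to\mathbb R_{\ge 0}$ is log-concave if $\log f$ is concave (with $\log 0=-\infty$). *)

(* Defs.v *)
From HB Require Import structures.
From mathcomp Require Import all_boot all_order all_algebra.
From mathcomp Require Import all_classical all_reals all_analysis.
Set Implicit Arguments. Unset Strict Implicit. Unset Printing Implicit Defensive.
Import Order.TTheory GRing.Theory Num.Theory.
Local Open Scope ring_scope.

Definition qform (R : realType) (M : nat) (A : 'M[R]_M) (x : 'rV[R]_M) : R :=
  (x *m A *m x^T) 0 0.

Definition psd_qform (R : realType) (M : nat) (A : 'M[R]_M) : Prop :=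
  forall x : 'rV[R]_M, 0 <= qform A x.

Definition elog (R : realType) (r : R) : \bar R :=
  if 0 < r then (ln r)%:E else -oo%E.

Definition log_concave (R : realType) (M : nat) (f : 'rV[R]_M -> R) : Prop :=
  (forall x, 0 <= f x) /\
  forall (x y : 'rV[R]_M) (t : R), 0 < t -> t < 1 ->
    (((1 - t)%:E * elog (f x)) + (t%:E * elog (f y)) <=
       elog (f ((1 - t) *: x + t *: y)%R))%E.

(* Main.v *)
Require Import Defs.
From HB Require Import structures.
From mathcomp Require Import all_boot all_order all_algebra.
From mathcomp Require Import all_classical all_reals all_analysis.
From mathcomp Require Import ring lra.
Import Order.TTheory GRing.Theory Num.Theory.
Local Open Scope ring_scope.

Section S.
Variables (R : realType) (M : nat) (A : 'M[R]_M).
Definition bil (u v : 'rV[R]_M) := (u *m A *m v^T) 0 0.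
Lemma bilDl u1 u2 v : bil (u1 + u2) v = bil u1 v + bil u2 v.
Proof. by rewrite /bil !mulmxDl mxE. Qed.
Lemma bilDr u v1 v2 : bil u (v1 + v2) = bil u v1 + bil u v2.
Proof. by rewrite /bil raddfD /= mulmxDr mxE. Qed.
Lemma bilZl k u v : bil (k *: u) v = k * bil u v.
Proof. by rewrite /bil -!scalemxAl mxE. Qed.
Lemma bilZr k u v : bil u (k *: v) = k * bil u v.
Proof. by rewrite /bil linearZ /= -scalemxAr mxE. Qed.

Lemma qconv (x y : 'rV[R]_M) t :
  qform A ((1 - t) *: x + t *: y) =
  (1 - t) * qform A x + t * qform A y - t * (1 - t) * qform A (x - y).
Proof.
have -> : x - y = x + (-1) *: y by rewrite scaleN1r.
rewrite /qform -!/(bil _ _).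
rewrite !(bilDl, bilDr, bilZl, bilZr). ring.
Qed.

Lemma ln_le_sub1 (u : R) : 0 < u -> ln u <= u - 1.
Proof. move=> u0; have := expR_ge1Dx (ln u); rewrite lnK ?posrE //; lra. Qed.

Lemma concln (u v t : R) : 0 < u -> 0 < v -> 0 <= t -> t <= 1 ->
  (1 - t) * ln u + t * ln v <= ln ((1 - t) * u + t * v).
Proof.
move=> u0 v0 t0 t1; set w := (1 - t) * u + t * v.
have w0 : 0 < w.
  rewrite /w; nra.
have h1 := ln_le_sub1 _ (divr_gt0 u0 w0).
have h2 := ln_le_sub1 _ (divr_gt0 v0 w0).
rewrite ln_div ?posrE // in h1; rewrite ln_div ?posrE // in h2.
have e : (1 - t) * (u / w - 1) + t * (v / w - 1) = 0.
  rewrite /w; field; exact: lt0r_neq0.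
have : (1 - t) * (ln u - ln w) + t * (ln v - ln w) <= 0.
  rewrite -e lerD // ler_wpM2l //; lra.
lra.
Qed.
End S.

Lemma lnF (R : realType) (a b c s : R) : 0 < a -> 0 <= b -> 0 <= s ->
  elog ((a + b * s) * expR (- (c * s))) = (ln (a + b * s) - c * s)%:E.
Proof.
move=> a0 b0 s0; have p : 0 < a + b * s by apply: ltr_pwDl => //; apply: mulr_ge0.
rewrite /elog mulr_gt0 ?expR_gt0 // lnM ?posrE ?expR_gt0 // expRK //.
Qed.

Theorem lemma1 (R : realType) (M : nat) (A : 'M[R]_M) (a b c : R)
  (ha : 0 <= a) (hb : 0 <= b) (hc : 0 <= c) (hA : psd_qform A)
  (hcab : b <= c * a) :
  log_concave (fun x : 'rV[R]_M => (a + b * qform A x) * expR (- (c * qform A x))).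
Proof.
split.
  move=> x; apply: mulr_ge0; last exact: expR_ge0.
  by apply: addr_ge0 => //; apply: mulr_ge0.
move=> x y t t0 t1.
have [a0|an0] := eqVneq a 0.
  have b0 : b = 0 by apply/le_anti; rewrite hb andbT; move: hcab; rewrite a0 mulr0.
  rewrite a0 b0 /elog !(mul0r, add0r) ltxx.
  rewrite (muleC (1 - t)%:E) (muleC t%:E) !gt0_mulNye ?lte_fin ?subr_gt0 //.
have apos : 0 < a by rewrite lt0r an0.
set z := (1 - t) *: x + t *: y.
have qx := hA x; have qy := hA y; have qz := hA z; have qxy := hA (x - y).
rewrite !lnF // -!EFinM -EFinD lee_fin.
set s := qform A x; set r := qform A y; set p := qform A z.
set m := (1 - t) * s + t * r.
have hpm : p <= m.
  rewrite /p /z qconv /m; have : 0 <= t * (1 - t) * qform A (x - y).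
    by rewrite !mulr_ge0 //; lra.
  rewrite /m /s /r; lra.
have p0 : 0 < a + b * p by apply: ltr_pwDl => //; apply: mulr_ge0.
have h1 := @concln R (a + b * s) (a + b * r) t (ltr_pwDl apos (mulr_ge0 hb qx))
  (ltr_pwDl apos (mulr_ge0 hb qy)) (ltW t0) (ltW t1).
have e1 : (1 - t) * (a + b * s) + t * (a + b * r) = a + b * m by rewrite /m; ring.
rewrite e1 in h1.
have m0 : 0 < a + b * m by apply: ltr_pwDl => //; apply: mulr_ge0 => //; apply: le_trans hpm.
have h2 := @ln_le_sub1 R _ (divr_gt0 m0 p0).
rewrite ln_div ?posrE // in h2.
have e2 : (a + b * m) / (a + b * p) - 1 = b * (m - p) / (a + b * p).
  by field; apply: lt0r_neq0.
rewrite e2 in h2.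
have h3 : b * (m - p) / (a + b * p) <= b * (m - p) / a.
  apply: ler_wpM2l; first by apply: mulr_ge0 => //; lra.
  by rewrite lef_pV2 ?posrE // lerDl mulr_ge0.
have h4 : b * (m - p) / a <= c * (m - p).
  rewrite ler_pdivrMr // mulrAC ler_wpM2r //; lra.
have : (1 - t) * (ln (a + b * s) - c * s) + t * (ln (a + b * r) - c * r)
   = (1 - t) * ln (a + b * s) + t * ln (a + b * r) - c * m by rewrite /m; ring.
move=> ->; lra.
Qed.
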